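(* Let $\mathbb{k}$ be a commutative ring containing $\mathbb{Q}$ and $M$ a filtered $\mathbb{k}$-module. Let $G^{(1)},H^{(1)}\subseteq GL^{(1)}_{\mathbb{k}}(M)$ be subgroups with $\langle G^{(1)},H^{(1)}\rangle=G^{(1)}\cdot H^{(1)}$, and $T_G,T_H\subseteq\mathrm{End}^{(1)}_{\mathbb{k}}(M)$ $\mathbb{k}$-submodules with $[T_G,T_H]\subseteq T_H$ (where $[\xi,\eta]=\xi\eta-\eta\xi$). Suppose $(T_G,G^{(1)})$ and $(T_H,H^{(1)})$ are of pointwise Lie type, realized by truncated exponential and logarithm maps in the following sense (stated for $G$; the same for $H$): for every $z\in M$, every $\xi\in T_G$ and every $g\in G^{(1)}$, and every integer $N\ge\max(\mathrm{ord}(\xi(z)),\mathrm{ord}((g-\mathrm{Id})(z)))$ when this maximum is finite, there are $\phi^{exp}_{N,z},\phi^{ln}_{N,z}\in\mathrm{End}^{(N+1)}_{\mathbb{k}}(M)$ such that $\Psi^{exp}(\xi,z):=\sum_{j=0}^N\frac{\xi^j}{j!}+\phi^{exp}_{N,z}\in G^{(1)}$ and $\Psi^{ln}(g,z):=\sum_{j=1}^N\frac{(-1)^{j+1}(g-\mathrm{Id})^j}{j}+\phi^{ln}_{N,z}\in T_G$, and these elements serve as the elements required in the definition of pointwise Lie type for $\xi,z$ (resp. $g,z$). Then the pair $(T_G+T_H,\ G^{(1)}\cdot H^{(1)})$ is of pointwise Lie type.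
   Context: $M=M_0\supseteq M_1\supseteq\cdots$ is a descending filtration by $\mathbb{k}$-submodules, $\mathrm{ord}(z)=\sup\{j:z\in M_j\}$, $\mathrm{End}^{(i)}_{\mathbb{k}}(M)=\{\phi:\phi(M_j)\subseteq M_{j+i}\ \forall j\}$, and $GL^{(i)}_{\mathbb{k}}(M)$ ($i\ge1$) is the group of $\mathbb{k}$-linear automorphisms $g$ with $g^{\pm1}(M_j)\subseteq M_j$ for all $j$ and $g-\mathrm{Id},g^{-1}-\mathrm{Id}\in\mathrm{End}^{(i)}_{\mathbb{k}}(M)$. A pair $(T,G^{(1)})$ (subgroup $G^{(1)}\subseteq GL^{(1)}$, submodule $T\subseteq\mathrm{End}^{(1)}$) is of pointwise Lie type if (a) for every $\xi\in T$ and $z\in M$ there is $g\in G^{(1)}$ with: if $\mathrm{ord}(\xi(z))<\infty$ then $\mathrm{ord}((g-\mathrm{Id}-\xi)(z))>\mathrm{ord}(\xi(z))$; (b) for every $g\in G^{(1)}$ and $z\in M$ there is $\xi\in T$ with: if $\mathrm{ord}((g-\mathrm{Id})(z))<\infty$ then $\mathrm{ord}((g-\mathrm{Id}-\xi)(z))>\mathrm{ord}((g-\mathrm{Id})(z))$. *)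

(* Defs.v *)
From mathcomp Require Import all_boot all_order all_algebra.
Set Implicit Arguments. Unset Strict Implicit. Unset Printing Implicit Defensive.
Import GRing.Theory.
Local Open Scope ring_scope.

Section Filtered.
Variables (R : comUnitRingType) (M : lmodType R).

Definition filtration (F : nat -> M -> Prop) : Prop :=
  [/\ (forall x, F 0%N x),
      (forall j x, F j.+1 x -> F j x),
      (forall j, F j 0),
      (forall j x y, F j x -> F j y -> F j (x + y)) &
      (forall j (a : R) x, F j x -> F j (a *: x))].

(* ord z = sup {j | z ∈ M_j}.  [ord_eq F z m] : ord z is finite and equals m
   (the set {j | z ∈ M_j} has maximum m); [ord_gt F w m] : ord w > m. *)
Definition ord_eq (F : nat -> M -> Prop) (z : M) (m : nat) : Prop :=
  F m z /\ (forall j, F j z -> (j <= m)%N).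
Definition ord_gt (F : nat -> M -> Prop) (w : M) (m : nat) : Prop :=
  exists j, (m < j)%N /\ F j w.

Definition klinear (f : M -> M) : Prop :=
  forall (a : R) x y, f (a *: x + y) = a *: f x + f y.

Definition End_i (F : nat -> M -> Prop) (i : nat) (f : M -> M) : Prop :=
  klinear f /\ forall j x, F j x -> F (j + i)%N (f x).

Definition GL_i (F : nat -> M -> Prop) (i : nat) (g : M -> M) : Prop :=
  exists ginv : M -> M,
    [/\ cancel g ginv, cancel ginv g, klinear g,
        (forall j x, F j x -> F j (g x)) /\ (forall j x, F j x -> F j (ginv x)) &
        End_i F i (fun x => g x - x) /\ End_i F i (fun x => ginv x - x)].

Definition subgroup1 (F : nat -> M -> Prop) (S : (M -> M) -> Prop) : Prop :=
  [/\ (forall g, S g -> GL_i F 1 g),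
      S id,
      (forall g h, S g -> S h -> S (g \o h)) &
      (forall g h, S g -> cancel g h -> cancel h g -> S h)].

Definition submod1 (F : nat -> M -> Prop) (T : (M -> M) -> Prop) : Prop :=
  [/\ (forall f, T f -> End_i F 1 f),
      T (fun _ => 0),
      (forall f g, T f -> T g -> T (fun x => f x + g x)) &
      (forall (a : R) f, T f -> T (fun x => a *: f x))].

Definition gen_subgroup (F : nat -> M -> Prop) (G H : (M -> M) -> Prop)
  (f : M -> M) : Prop :=
  forall S, subgroup1 F S -> (forall g, G g -> S g) -> (forall h, H h -> S h) -> S f.

Definition prod_set (G H : (M -> M) -> Prop) (f : M -> M) : Prop :=
  exists g h, [/\ G g, H h & f = g \o h].

Definition sum_set (T1 T2 : (M -> M) -> Prop) (f : M -> M) : Prop :=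
  exists xi eta, [/\ T1 xi, T2 eta & f = (fun x => xi x + eta x)].

Definition pointwise_Lie (F : nat -> M -> Prop) (T G : (M -> M) -> Prop) : Prop :=
  (forall xi z, T xi -> exists g, G g /\
     forall m, ord_eq F (xi z) m -> ord_gt F (g z - z - xi z) m) /\
  (forall g z, G g -> exists xi, T xi /\
     forall m, ord_eq F (g z - z) m -> ord_gt F (g z - z - xi z) m).

Definition Psi_exp (N : nat) (xi phi : M -> M) (x : M) : M :=
  \sum_(j < N.+1) ((j`!)%:R)^-1 *: iter j xi x + phi x.

Definition Psi_ln (N : nat) (g phi : M -> M) (x : M) : M :=
  \sum_(1 <= j < N.+1) ((-1) ^+ j.+1 / (j%:R)) *: iter j (fun y => g y - y) x
  + phi x.

Definition exp_ln_realized (F : nat -> M -> Prop) (T G : (M -> M) -> Prop) : Prop :=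
  (forall xi z N, T xi -> (forall m, ord_eq F (xi z) m -> (m <= N)%N) ->
     exists phi, [/\ End_i F N.+1 phi, G (Psi_exp N xi phi) &
       forall m, ord_eq F (xi z) m ->
         ord_gt F (Psi_exp N xi phi z - z - xi z) m]) /\
  (forall g z N, G g -> (forall m, ord_eq F (g z - z) m -> (m <= N)%N) ->
     exists phi, [/\ End_i F N.+1 phi, T (Psi_ln N g phi) &
       forall m, ord_eq F (g z - z) m ->
         ord_gt F (g z - z - Psi_ln N g phi z) m]).

End Filtered.

(* Main.v *)
Require Import Defs.
From HB Require Import structures.
From mathcomp Require Import all_boot all_order all_algebra.
From mathcomp Require Import boolp ring.
Set Implicit Arguments. Unset Strict Implicit. Unset Printing Implicit Defensive.
Import GRing.Theory.
Local Open Scope ring_scope.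

(* Proof strategy: work in the ring A of filtered R-linear
   operators on M, truncated exp/log, and a Lie-correspondence argument by
   induction on the filtration level using polynomial interpolation. *)

Section Ops.
Variables (R : comUnitRingType) (M : lmodType R) (F : nat -> M -> Prop).
Hypothesis hF : filtration F.
Variable x0 : M.
Hypothesis hx0 : x0 != 0.
Hypothesis hQ : forall n : nat, (n.+1)%:R \is a @GRing.unit R.

Lemma F0 j : F j 0. Proof. by case: hF. Qed.
Lemma FD j x y : F j x -> F j y -> F j (x + y). Proof. by case: hF => _ _ _ h _; apply: h. Qed.
Lemma FZ j (a : R) x : F j x -> F j (a *: x). Proof. by case: hF => _ _ _ _ h; apply: h. Qed.
Lemma FN j x : F j x -> F j (- x).
Proof. by move=> h; rewrite -scaleN1r; apply: FZ. Qed.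
Lemma FB j x y : F j x -> F j y -> F j (x - y).
Proof. by move=> h1 h2; apply: FD => //; apply: FN. Qed.
Lemma Fall x : F 0 x. Proof. by case: hF. Qed.
Lemma Fle i j x : (i <= j)%N -> F j x -> F i x.
Proof.
move=> /subnK <-; elim: (j - i)%N => [|k IH] //= h; apply: IH.
by case: hF => _ h1 _ _ _; apply: h1; rewrite addSn in h.
Qed.

Definition okop (f : M -> M) := (forall (a : R) x y, f (a *: x + y) = a *: f x + f y)
   /\ (forall j x, F j x -> F j (f x)).
Record A := MkA { fA :> M -> M; okA : okop fA }.
HB.instance Definition _ := gen_eqMixin A.
HB.instance Definition _ := gen_choiceMixin A.
Lemma Aext (a b : A) : (forall x, a x = b x) -> a = b.
Proof.
case: a b => f hf [g hg] /= H.
have E : f = g by apply: funext.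
subst g; congr MkA; exact: Prop_irrelevance.
Qed.

Lemma lin_of f : okop f -> forall (a : R) x y, f (a *: x + y) = a *: f x + f y.
Proof. by case. Qed.
Lemma pres_of f : okop f -> forall j x, F j x -> F j (f x).
Proof. by case. Qed.

Lemma opD (a : A) x y : a (x + y) = a x + a y.
Proof. by rewrite -[x]scale1r (lin_of (okA a)) !scale1r. Qed.
Lemma op0 (a : A) : a 0 = 0.
Proof. by move: (opD a 0 0); rewrite addr0 => /(congr1 (fun v => v - a 0)); rewrite subrr addrK. Qed.
Lemma opZ (a : A) r x : a (r *: x) = r *: a x.
Proof. by rewrite -[r *: x]addr0 (lin_of (okA a)) op0 addr0. Qed.
Lemma opN (a : A) x : a (- x) = - a x.
Proof. by rewrite -scaleN1r opZ scaleN1r. Qed.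
Lemma opB (a : A) x y : a (x - y) = a x - a y.
Proof. by rewrite opD opN. Qed.
Lemma opF (a : A) j x : F j x -> F j (a x).
Proof. by case: (okA a) => _ h; apply: h. Qed.

Lemma ok_zero : okop (fun _ => 0).
Proof. by split => [*|j x _]; [rewrite scaler0 addr0 | exact: F0]. Qed.
Lemma ok_add (a b : A) : okop (fun x => a x + b x).
Proof.
split => [r x y|j x h]; last by apply: FD; apply: opF.
by rewrite !opD !opZ scalerDr addrACA.
Qed.
Lemma ok_opp (a : A) : okop (fun x => - a x).
Proof.
split => [r x y|j x h]; last by apply: FN; apply: opF.
by rewrite opD opZ opprD scalerN.
Qed.
Lemma ok_one : okop id. Proof. by split. Qed.
Lemma ok_mul (a b : A) : okop (fun x => a (b x)).
Proof.
split => [r x y|j x h]; last by do 2 apply: opF.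
by rewrite opD opZ opD opZ.
Qed.
Definition zeroA := MkA ok_zero.
Definition addA (a b : A) := MkA (ok_add a b).
Definition oppA (a : A) := MkA (ok_opp a).
Definition oneA := MkA ok_one.
Definition mulA (a b : A) := MkA (ok_mul a b).

Lemma oneA_neq0 : oneA != zeroA.
Proof.
apply/eqP => h; move/eqP: hx0; apply.
by have := congr1 (fun f : A => f x0) h.
Qed.

Lemma addA_A : associative addA. Proof. by move=> a b c; apply: Aext => x /=; rewrite addrA. Qed.
Lemma addA_C : commutative addA. Proof. by move=> a b; apply: Aext => x /=; rewrite addrC. Qed.
Lemma addA_0 : left_id zeroA addA. Proof. by move=> a; apply: Aext => x /=; rewrite add0r. Qed.
Lemma addA_N : left_inverse zeroA oppA addA. Proof. by move=> a; apply: Aext => x /=; rewrite addNr. Qed.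
Lemma mulA_A : associative mulA. Proof. by move=> a b c; apply: Aext. Qed.
Lemma mulA_1l : left_id oneA mulA. Proof. by move=> a; apply: Aext. Qed.
Lemma mulA_1r : right_id oneA mulA. Proof. by move=> a; apply: Aext. Qed.
Lemma mulA_Dl : left_distributive mulA addA. Proof. by move=> a b c; apply: Aext. Qed.
Lemma mulA_Dr : right_distributive mulA addA.
Proof. by move=> a b c; apply: Aext => x /=; rewrite opD. Qed.

HB.instance Definition _ := GRing.isNzRing.Build A addA_A addA_C addA_0 addA_N
  mulA_A mulA_1l mulA_1r mulA_Dl mulA_Dr oneA_neq0.

Lemma addE (a b : A) x : (a + b) x = a x + b x. Proof. by []. Qed.
Lemma mulE (a b : A) x : (a * b) x = a (b x). Proof. by []. Qed.
Lemma oppE (a : A) x : (- a) x = - a x. Proof. by []. Qed.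
Lemma subE (a b : A) x : (a - b) x = a x - b x. Proof. by []. Qed.
Lemma zeroE x : (0 : A) x = 0. Proof. by []. Qed.
Lemma oneE x : (1 : A) x = x. Proof. by []. Qed.
Lemma expE (a : A) k x : (a ^+ k) x = iter k a x.
Proof. elim: k => [|k IH] //; by rewrite exprS mulE IH. Qed.
Lemma sumE I (r : seq I) (P : pred I) (f : I -> A) x :
  (\sum_(i <- r | P i) f i) x = \sum_(i <- r | P i) f i x.
Proof.
elim: r => [|i r IH]; first by rewrite !big_nil.
by rewrite !big_cons; case: (P i); rewrite ?addE IH.
Qed.


Lemma ok_sc (r : R) : okop (fun x => r *: x).
Proof.
split => [a x y|j x h]; last exact: FZ.
by rewrite scalerDr !scalerA mulrC.
Qed.
Definition sc r := MkA (ok_sc r).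
Lemma scE r x : sc r x = r *: x. Proof. by []. Qed.
Lemma sc_comm r (a : A) : sc r * a = a * sc r.
Proof. by apply: Aext => x; rewrite !mulE !scE opZ. Qed.
Lemma sc1 : sc 1 = 1. Proof. by apply: Aext => x; rewrite scE scale1r. Qed.
Lemma scM r s : sc (r * s) = sc r * sc s.
Proof. by apply: Aext => x; rewrite mulE !scE scalerA. Qed.
Lemma scD r s : sc (r + s) = sc r + sc s.
Proof. by apply: Aext => x; rewrite addE !scE scalerDl. Qed.
Lemma scN r : sc (- r) = - sc r.
Proof. by apply: Aext => x; rewrite oppE !scE scaleNr. Qed.
Lemma sc0 : sc 0 = 0.
Proof. by apply: Aext => x; rewrite scE scale0r. Qed.
Lemma sc_nat n : (n%:R : A) = sc n%:R.
Proof. elim: n => [|n IH]; first by rewrite sc0. by rewrite -addn1 !natrD IH scD sc1. Qed.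
Lemma sc_unit r s : r * s = 1 -> sc r * sc s = 1.
Proof. by move=> h; rewrite -scM h sc1. Qed.

Definition J k (a : A) := forall j x, F j x -> F (j + k) (a x).
Lemma J0a a : J 0 a. Proof. by move=> j x h; rewrite addn0; apply: opF. Qed.
Lemma Jle k l a : (k <= l)%N -> J l a -> J k a.
Proof. by move=> kl h j x /h; apply: Fle; rewrite leq_add2l. Qed.
Lemma J0 k : J k 0. Proof. by move=> j x _; exact: F0. Qed.
Lemma JD k a b : J k a -> J k b -> J k (a + b).
Proof. by move=> ha hb j x h; apply: FD; [apply: ha|apply: hb]. Qed.
Lemma JN k a : J k a -> J k (- a).
Proof. by move=> ha j x h; apply: FN; apply: ha. Qed.
Lemma JB k a b : J k a -> J k b -> J k (a - b).
Proof. by move=> ha hb; apply: JD => //; apply: JN. Qed.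
Lemma JM k l a b : J k a -> J l b -> J (k + l) (a * b).
Proof. by move=> ha hb j x h; rewrite mulE (addnC k l) addnA; apply: ha; apply: hb. Qed.
Lemma JMl k a b : J k b -> J k (a * b).
Proof. by move=> hb; rewrite -[k]add0n; apply: JM => //; apply: J0a. Qed.
Lemma JMr k a b : J k a -> J k (a * b).
Proof. by move=> ha; rewrite -[k]addn0; apply: JM => //; apply: J0a. Qed.
Lemma Jsc k r a : J k a -> J k (sc r * a).
Proof. exact: JMl. Qed.
Lemma Jsum k I (r : seq I) (P : pred I) (f : I -> A) :
  (forall i, P i -> J k (f i)) -> J k (\sum_(i <- r | P i) f i).
Proof. by move=> h; apply: big_ind => //; [apply: J0|apply: JD]. Qed.
Lemma Jexp i k a : J i a -> J (i * k) (a ^+ k).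
Proof.
move=> ha; elim: k => [|k IH]; first by rewrite muln0; apply: J0a.
by rewrite exprS mulnS; apply: JM.
Qed.
Lemma Jexp1 k a : J 1 a -> J k (a ^+ k).
Proof. by move=> h; have := Jexp k h; rewrite mul1n. Qed.

Definition cg k (a b : A) := J k (a - b).
Lemma cg_refl k a : cg k a a. Proof. by rewrite /cg subrr; apply: J0. Qed.
Lemma cg_sym k a b : cg k a b -> cg k b a.
Proof. by move=> h; rewrite /cg -opprB; apply: JN. Qed.
Lemma cg_trans k a b c : cg k a b -> cg k b c -> cg k a c.
Proof. by move=> h1 h2; rewrite /cg -(subrKA b); apply: JD. Qed.
Lemma cgD k a b c d : cg k a b -> cg k c d -> cg k (a + c) (b + d).
Proof. by move=> h1 h2; rewrite /cg opprD addrACA; apply: JD. Qed.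
Lemma cgN k a b : cg k a b -> cg k (- a) (- b).
Proof. by move=> h; rewrite /cg -opprD; apply: JN. Qed.
Lemma cgB k a b c d : cg k a b -> cg k c d -> cg k (a - c) (b - d).
Proof. by move=> h1 h2; apply: cgD => //; apply: cgN. Qed.
Lemma cgM k a b c d : cg k a b -> cg k c d -> cg k (a * c) (b * d).
Proof.
move=> h1 h2; rewrite /cg -(subrKA (b * c)) -mulrBl -mulrBr.
by apply: JD; [apply: JMr|apply: JMl].
Qed.
Lemma cgMl k a c d : cg k c d -> cg k (a * c) (a * d).
Proof. by apply: cgM; apply: cg_refl. Qed.
Lemma cgMr k a b c : cg k a b -> cg k (a * c) (b * c).
Proof. by move=> h; apply: cgM => //; apply: cg_refl. Qed.
Lemma cg_le k l a b : (k <= l)%N -> cg l a b -> cg k a b.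
Proof. exact: Jle. Qed.
Lemma cg_sum k I (r : seq I) (P : pred I) (f g : I -> A) :
  (forall i, P i -> cg k (f i) (g i)) ->
  cg k (\sum_(i <- r | P i) f i) (\sum_(i <- r | P i) g i).
Proof. by move=> h; rewrite /cg -sumrB; apply: Jsum. Qed.
Lemma cgJ k a b : J k b -> cg k (a + b) a.
Proof. by move=> h; rewrite /cg addrC addKr. Qed.
Lemma cg0 k a : J k a -> cg k a 0.
Proof. by rewrite /cg subr0. Qed.
Lemma cg_0 k a : cg k a 0 -> J k a.
Proof. by rewrite /cg subr0. Qed.

Lemma natU m : (0 < m)%N -> (m%:R : R) \is a GRing.unit.
Proof. by case: m => // m _; apply: hQ. Qed.
Lemma factU k : ((k`!)%:R : R) \is a GRing.unit.
Proof. exact/natU/fact_gt0. Qed.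
Definition ifact k := sc ((k`!)%:R)^-1.
Lemma ifact0 : ifact 0 = 1. Proof. by rewrite /ifact /= invr1 sc1. Qed.
Lemma ifact1 : ifact 1 = 1. Proof. by rewrite /ifact /= invr1 sc1. Qed.
Lemma binR k i : (i <= k)%N ->
  ((k`!)%:R : R)^-1 * ('C(k, i))%:R = ((i`!)%:R)^-1 * (((k - i)`!)%:R)^-1.
Proof.
move=> ik; rewrite -(bin_fact ik) natrM.
have hC : (('C(k, i))%:R : R) \is a GRing.unit by apply: natU; rewrite bin_gt0.
have hB : ((i`! * (k - i)`!)%:R : R) \is a GRing.unit by apply: natU; rewrite muln_gt0 !fact_gt0.
by rewrite invrM // -mulrA mulVr // mulr1 natrM invrM ?factU // mulrC.
Qed.

Definition expT n (X : A) := \sum_(k < n) ifact k * X ^+ k.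

Lemma Lcut n (u v : nat -> A) : (forall i, J i (u i)) -> (forall i, J i (v i)) ->
  cg n (\sum_(k < n) \sum_(i < k.+1) u (k - i)%N * v i)
       ((\sum_(i < n) u i) * (\sum_(i < n) v i)).
Proof.
move=> hu hv.
set P := \poly_(i < n) u i; set Q := \poly_(i < n) v i.
have eP : \sum_(i < n) u i = P.[1].
  by rewrite horner_poly; apply: eq_bigr => i _; rewrite expr1n mulr1.
have eQ : \sum_(i < n) v i = Q.[1].
  by rewrite horner_poly; apply: eq_bigr => i _; rewrite expr1n mulr1.
have JP i : J i P`_i by rewrite coef_poly; case: ifP => _; [apply: hu|apply: J0].
have JQ i : J i Q`_i by rewrite coef_poly; case: ifP => _; [apply: hv|apply: J0].
rewrite eP eQ -hornerM_comm; last by rewrite /comm_poly mul1r mulr1.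
have sz : (size (P * Q)%R <= n + n)%N.
  apply: (leq_trans (size_polyMleq P Q)); rewrite -subn1 leq_subLR.
  apply: (leq_trans (leq_add (size_poly n u) (size_poly n v))); by rewrite leq_addl.
rewrite (horner_coef_wide _ sz) big_split_ord /=.
apply: cg_sym; apply: cg_trans (cgJ _ _) _.
  apply: Jsum => k _; rewrite expr1n mulr1 coefM; apply: Jsum => j _.
  have hj : (j <= n + k)%N by rewrite -ltnS.
  apply: (Jle (k := n) (l := (j + (n + k - j))%N)); first by rewrite subnKC // leq_addr.
  exact: JM.
apply: cg_sum => k _; rewrite expr1n mulr1 coefMr.
have -> : \sum_(j < k.+1) P`_(k - j) * Q`_j = \sum_(i < k.+1) u (k - i)%N * v i.
  apply: eq_bigr => j _; rewrite !coef_poly.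
  have hj : (j < n)%N by apply: (leq_ltn_trans _ (ltn_ord k)); rewrite -ltnS.
  have hkj : (k - j < n)%N by apply: (leq_ltn_trans (leq_subr _ _)).
  by rewrite hj hkj.
exact: cg_refl.
Qed.

Lemma Lcut2 n (u v : nat -> A) : (forall i, J i (u i)) -> (forall i, J i (v i)) ->
  cg n (\sum_(k < n) \sum_(i < k.+1) u i * v (k - i)%N)
       ((\sum_(i < n) u i) * (\sum_(i < n) v i)).
Proof.
move=> hu hv.
set P := \poly_(i < n) u i; set Q := \poly_(i < n) v i.
have eP : \sum_(i < n) u i = P.[1].
  by rewrite horner_poly; apply: eq_bigr => i _; rewrite expr1n mulr1.
have eQ : \sum_(i < n) v i = Q.[1].
  by rewrite horner_poly; apply: eq_bigr => i _; rewrite expr1n mulr1.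
have JP i : J i P`_i by rewrite coef_poly; case: ifP => _; [apply: hu|apply: J0].
have JQ i : J i Q`_i by rewrite coef_poly; case: ifP => _; [apply: hv|apply: J0].
rewrite eP eQ -hornerM_comm; last by rewrite /comm_poly mul1r mulr1.
have sz : (size (P * Q)%R <= n + n)%N.
  apply: (leq_trans (size_polyMleq P Q)); rewrite -subn1 leq_subLR.
  apply: (leq_trans (leq_add (size_poly n u) (size_poly n v))); by rewrite leq_addl.
rewrite (horner_coef_wide _ sz) big_split_ord /=.
apply: cg_sym; apply: cg_trans (cgJ _ _) _.
  apply: Jsum => k _; rewrite expr1n mulr1 coefM; apply: Jsum => j _.
  have hj : (j <= n + k)%N by rewrite -ltnS.
  apply: (Jle (k := n) (l := (j + (n + k - j))%N)); first by rewrite subnKC // leq_addr.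
  exact: JM.
apply: cg_sum => k _; rewrite expr1n mulr1 coefM.
have -> : \sum_(j < k.+1) P`_j * Q`_(k - j) = \sum_(i < k.+1) u i * v (k - i)%N.
  apply: eq_bigr => j _; rewrite !coef_poly.
  have hj : (j < n)%N by apply: (leq_ltn_trans _ (ltn_ord k)); rewrite -ltnS.
  have hkj : (k - j < n)%N by apply: (leq_ltn_trans (leq_subr _ _)).
  by rewrite hj hkj.
exact: cg_refl.
Qed.

Lemma ifact_comm k (a : A) : ifact k * a = a * ifact k.
Proof. exact: sc_comm. Qed.
Lemma Jifact i k a : J i a -> J i (ifact k * a).
Proof. exact: Jsc. Qed.

Lemma scscM r s (a b : A) : sc r * a * (sc s * b) = sc (r * s) * (a * b).
Proof. by rewrite -mulrA [a * (_ * _)]mulrA -sc_comm -!mulrA mulrA -scM. Qed.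

Lemma expTD n X Y : X * Y = Y * X -> J 1 X -> J 1 Y ->
  cg n (expT n (X + Y)) (expT n X * expT n Y).
Proof.
move=> cXY hX hY.
have -> : expT n (X + Y) = \sum_(k < n) \sum_(i < k.+1)
   (ifact (k - i) * X ^+ (k - i)) * (ifact i * Y ^+ i).
  apply: eq_bigr => k _; rewrite (exprDn_comm _ cXY) mulr_sumr; apply: eq_bigr => i _.
  have ik : (i <= k)%N by rewrite -ltnS.
  rewrite -mulr_natl sc_nat mulrA -scM binR // scscM mulrC.
  by rewrite /ifact.
apply: (@Lcut n (fun j => ifact j * X ^+ j) (fun j => ifact j * Y ^+ j)) => i;
  apply: Jifact; exact: Jexp1.
Qed.

Lemma expT0 n : (0 < n)%N -> expT n 0 = 1.
Proof.
case: n => // n _; rewrite /expT big_ord_recl expr0 mulr1 ifact0 big1 ?addr0 //.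
by move=> i _; rewrite expr0n /= mulr0.
Qed.

Lemma expTN n X : (0 < n)%N -> J 1 X -> cg n (expT n X * expT n (- X)) 1.
Proof.
move=> n0 hX; apply: cg_sym; rewrite -(expT0 n0) -(subrr X).
by apply: expTD => //; [rewrite mulrN mulNr | apply: JN].
Qed.
Lemma expNT n X : (0 < n)%N -> J 1 X -> cg n (expT n (- X) * expT n X) 1.
Proof.
move=> n0 hX; have := expTN n0 (JN hX); by rewrite opprK.
Qed.

Lemma expT_J1 n X : (0 < n)%N -> J 1 X -> J 1 (expT n X - 1).
Proof.
case: n => // n _ hX; rewrite /expT big_ord_recl expr0 mulr1 ifact0 [1 + _]addrC addrK.
apply: Jsum => i _; apply: Jifact; apply: (Jle (l := i.+1)) => //; exact: Jexp1.
Qed.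
Lemma expT_cg1 n X : (0 < n)%N -> J 1 X -> cg 1 (expT n X) 1.
Proof. exact: expT_J1. Qed.

Lemma powD k i X D : (0 < i)%N -> J 1 X -> J i D ->
  cg i.+1 ((X + D) ^+ k) (X ^+ k + (if k == 1%N then D else 0)).
Proof.
move=> i0 hX hD; elim: k => [|k IH]; first by rewrite !expr0 addr0; apply: cg_refl.
rewrite exprSr; apply: cg_trans (cgMr _ IH) _.
case: k IH => [|k] _.
  by rewrite expr0 addr0 mul1r expr1 /=; apply: cg_refl.
rewrite !eqSS /= addr0 mulrDl mulrDr -exprSr -addrA; apply: cgJ.
have hi : (i.+1 <= k.+1 + i)%N by rewrite addSn ltnS leq_addl.
apply: JD; first by apply: (Jle hi); exact: JM (Jexp1 _ hX) hD.
case: eqP => _; last by rewrite mul0r; apply: J0.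
rewrite mulrDr; apply: JD.
  by rewrite -addn1; apply: JM.
apply: (Jle (l := (i + i)%N)); first by rewrite -addn1 leq_add2l.
exact: JM.
Qed.

Lemma expT_add n i X D : (0 < i)%N -> (1 < n)%N -> J 1 X -> J i D ->
  cg i.+1 (expT n (X + D)) (expT n X + D).
Proof.
move=> i0 n1 hX hD; rewrite /expT.
have h : cg i.+1 (\sum_(k < n) ifact k * (X + D) ^+ k)
   (\sum_(k < n) ifact k * (X ^+ k + (if (k : nat) == 1%N then D else 0))).
  by apply: cg_sum => k _; apply: cgMl; apply: powD.
apply: cg_trans h _.
rewrite (eq_bigr (fun k : 'I_n => ifact k * X ^+ k + ifact k * (if k == 1%N :> nat then D else 0)));
  last by move=> k _; rewrite mulrDr.
rewrite big_split /=; apply: cgD; first exact: cg_refl.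
rewrite (bigD1 (Ordinal n1)) //= ifact1 mul1r big1 ?addr0; first exact: cg_refl.
by move=> k /negbTE; rewrite -val_eqE /= => ->; rewrite mulr0.
Qed.

Definition logT n (g : A) :=
  \sum_(1 <= k < n) sc ((-1) ^+ k.+1 / (k%:R)) * (g - 1) ^+ k.

Lemma logT_cg n j g : (0 < j)%N -> (1 < n)%N -> J j (g - 1) -> cg j.+1 (logT n g) (g - 1).
Proof.
move=> j0 n1 hg; rewrite /logT -(subnKC n1) big_nat_recl //= expr1 expr2 mulN1r opprK invr1 mulr1 sc1 mul1r.
apply: cgJ; rewrite big_nat; apply: Jsum => k /andP[k1 hk]; apply: Jsc.
apply: (Jle (l := (j * k.+1)%N)); last exact: Jexp.
by rewrite mulnS -{1}[j]addn0 ltn_add2l muln_gt0 j0.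
Qed.

Lemma expT_inj n j X Y : (1 < n)%N -> J 1 X -> J 1 Y ->
  cg j (expT n X) (expT n Y) -> cg j X Y.
Proof.
move=> n1 hX hY he.
suff : forall i, (i <= j)%N -> cg i X Y by apply.
elim=> [|i IH] ij; first exact: J0a.
case: i IH ij => [|i] IH ij; first exact: JB.
have hD : J i.+1 (Y - X) by apply: cg_sym; apply: IH; apply: ltnW.
have e := expT_add (ltn0Sn i) n1 hX hD; rewrite addrC subrK in e.
have e2 : cg i.+2 (expT n X) (expT n Y) by apply: cg_le he.
have e3 := cg_trans e2 e.
apply: cg_sym; move: e3; rewrite /cg opprD addrA subrr add0r.
by move=> h; rewrite -[Y - X]opprK; apply: JN.
Qed.

Lemma conjT n P Q X : cg n (P * Q) 1 -> cg n (Q * P) 1 ->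
  cg n (P * expT n X * Q) (expT n (P * X * Q)).
Proof.
move=> hPQ hQP.
have pw k : cg n (P * X ^+ k * Q) ((P * X * Q) ^+ k).
  elim: k => [|k IH]; first by rewrite mulr1 expr0.
  rewrite [(P * X * Q) ^+ k.+1]exprSr; apply: (cg_trans _ (cgMr (P * X * Q) IH)).
  have -> : P * X ^+ k * Q * (P * X * Q) = P * (X ^+ k * (Q * P) * X) * Q by rewrite !mulrA.
  rewrite exprSr; apply: cgMr; apply: cgMl; apply: cgMr.
  by rewrite -{1}[X ^+ k]mulr1; apply: cgMl; apply: cg_sym.
rewrite /expT mulr_sumr mulr_suml; apply: cg_sum => k _.
rewrite mulrA -[P * ifact k]ifact_comm -!mulrA; apply: cgMl; rewrite mulrA.
by rewrite [P * (X * Q)]mulrA; apply: pw.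
Qed.

Definition ad (X Y : A) := X * Y - Y * X.
Definition adk i X Y := iter i (ad X) Y.

Lemma bump0 i : bump 0 i = i.+1. Proof. by []. Qed.

Lemma leibniz k X Y : X ^+ k * Y = \sum_(i < k.+1) (adk i X Y * X ^+ (k - i)) *+ 'C(k, i).
Proof.
elim: k => [|k IH]; first by rewrite big_ord1 /= mulr1n expr0 mulr1 mul1r.
rewrite exprS -mulrA IH mulr_sumr.
have step (i : 'I_k.+1) : X * ((adk i X Y * X ^+ (k - i)) *+ 'C(k, i)) =
   (adk i.+1 X Y * X ^+ (k - i)) *+ 'C(k, i) + (adk i X Y * X ^+ (k.+1 - i)) *+ 'C(k, i).
  rewrite mulrnAr -mulrnDl; congr (_ *+ _).
  have ik : (i <= k)%N by rewrite -ltnS.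
  by rewrite subSn // exprS /= /ad [adk i X Y * (X * _)]mulrA -mulrDl subrK mulrA.
rewrite (eq_bigr _ (fun i _ => step i)) big_split /=.
rewrite [in RHS]big_ord_recl /= subn0.
rewrite [in RHS](eq_bigr (fun i : 'I_k.+1 => ad X (adk i X Y) * X ^+ (k - i) *+ 'C(k, i)
   + adk i.+1 X Y * X ^+ (k - i) *+ 'C(k, i.+1))); last first.
  by move=> i _; rewrite bump0 add0n subSS binS mulrnDr addrC.
rewrite big_split /= addrCA; congr (_ + _).
rewrite big_ord_recl /= subn0 !bin0; congr (_ + _).
rewrite [in RHS]big_ord_recr /= bin_small // mulr0n addr0.
by apply: eq_bigr => i _; rewrite bump0 subSS.
Qed.

Lemma J_adk i X Y : J 1 X -> J i (adk i X Y).
Proof.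
move=> hX; elim: i => [|i IH]; first exact: J0a.
rewrite /= /ad -addn1 addnC; apply: JB; first exact: JM.
by rewrite addnC; apply: JM.
Qed.

Lemma AdT n X Y : (0 < n)%N -> J 1 X ->
  cg n (expT n X * Y * expT n (- X)) (\sum_(i < n) ifact i * adk i X Y).
Proof.
move=> n0 hX.
have h1 : cg n (expT n X * Y) ((\sum_(i < n) ifact i * adk i X Y) * expT n X).
  have -> : expT n X * Y = \sum_(k < n) \sum_(i < k.+1)
      (ifact i * adk i X Y) * (ifact (k - i) * X ^+ (k - i)).
    rewrite /expT mulr_suml; apply: eq_bigr => k _.
    rewrite -mulrA leibniz mulr_sumr; apply: eq_bigr => i _.
    have ik : (i <= k)%N by rewrite -ltnS.
    rewrite -mulr_natl sc_nat mulrA -scM binR // scscM.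
    by rewrite /ifact.
  apply: (@Lcut2 n (fun j => ifact j * adk j X Y) (fun j => ifact j * X ^+ j)) => i;
    apply: Jifact; [exact: J_adk | exact: Jexp1].
apply: cg_trans (cgMr _ h1) _.
rewrite -mulrA -[X in cg _ _ X]mulr1; apply: cgMl; exact: expTN.
Qed.

Lemma sc_sum I (r : seq I) (P : pred I) (f : I -> R) :
  sc (\sum_(i <- r | P i) f i) = \sum_(i <- r | P i) sc (f i).
Proof.
elim: r => [|i r IH]; first by rewrite !big_nil sc0.
by rewrite !big_cons; case: (P i); rewrite ?scD IH.
Qed.

Lemma sc_natX t e : (t%:R : A) ^+ e = sc ((t%:R : R) ^+ e).
Proof. by rewrite -natrX sc_nat natrX. Qed.

Lemma interp (W : A -> Prop) : W 0 -> (forall a b, W a -> W b -> W (a + b)) ->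
  (forall r a, W a -> W (sc r * a)) ->
  forall p : {poly A}, (forall t : nat, (t < size p)%N -> W p.[t%:R]) -> forall d, W p`_d.
Proof.
move=> W0 WD WZ p hp d.
set D := size p.
case: (ltnP d D) => hd; last by rewrite nth_default.
pose a : 'rV[R]_D := \row_(j < D) (j : nat)%:R.
pose V := Vandermonde D a.
have hV : V \in unitmx.
  rewrite unitmxE det_Vandermonde; apply: (big_ind (fun x : R => x \is a GRing.unit)); first exact: unitr1.
    by move=> x y hx hy; rewrite unitrM hx.
  move=> i _; apply: (big_ind (fun x : R => x \is a GRing.unit)); first exact: unitr1.
    by move=> x y hx hy; rewrite unitrM hx.
  move=> j ij; rewrite !mxE -natrB; last exact: ltnW.
  by apply: natU; rewrite subn_gt0.
set U := invmx V.
have hVU := mulmxV hV.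
have ev (t : 'I_D) : p.[(t : nat)%:R] = \sum_(e < D) sc (V e t) * p`_e.
  rewrite horner_coef; apply: eq_bigr => e _.
  by rewrite sc_natX -sc_comm /V /Vandermonde !mxE.
have -> : p`_d = \sum_(t < D) sc (U t (Ordinal hd)) * p.[(t : nat)%:R].
  rewrite (eq_bigr (fun t => \sum_(e < D) sc (U t (Ordinal hd)) * (sc (V e t) * p`_e)));
    last by move=> t _; rewrite ev mulr_sumr.
  rewrite exchange_big /=.
  rewrite (eq_bigr (fun e : 'I_D => sc ((V *m U) e (Ordinal hd)) * p`_e)); last first.
    move=> e _; rewrite !mxE sc_sum mulr_suml; apply: eq_bigr => t _.
    by rewrite mulrA -scM mulrC.
  rewrite hVU (bigD1 (Ordinal hd)) //= !mxE eqxx sc1 mul1r big1 ?addr0 //.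
  by move=> e /negbTE ne; rewrite !mxE ne sc0 mul0r.
by apply: (big_ind W) => // t _; apply: WZ; apply: hp.
Qed.

Definition expP n (p : {poly A}) := \sum_(k < n) (ifact k)%:P * p ^+ k.

Lemma commP (q : {poly A}) (t : nat) : comm_poly q t%:R.
Proof. by rewrite /comm_poly; apply/esym/commr_nat. Qed.
Lemma evM (p q : {poly A}) (t : nat) : (p * q).[t%:R] = p.[t%:R] * q.[t%:R].
Proof. exact/hornerM_comm/commP. Qed.
Lemma evX (p : {poly A}) k (t : nat) : (p ^+ k).[t%:R] = p.[t%:R] ^+ k.
Proof. exact/horner_exp_comm/commP. Qed.
Lemma evexpP n (p : {poly A}) (t : nat) : (expP n p).[t%:R] = expT n p.[t%:R].
Proof.
rewrite /expP horner_sum; apply: eq_bigr => k _.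
by rewrite evM hornerC evX.
Qed.
Lemma evCX (c : A) (t : nat) : (c%:P * 'X).[t%:R] = c * t%:R.
Proof. by rewrite hornerMX hornerC. Qed.

Lemma coefM0 (P Q : {poly A}) : (P * Q)`_0 = P`_0 * Q`_0.
Proof. by rewrite coefM big_ord1. Qed.
Lemma coefM1 (P Q : {poly A}) : (P * Q)`_1 = P`_0 * Q`_1 + P`_1 * Q`_0.
Proof. by rewrite coefM big_ord_recl big_ord1. Qed.
Lemma coef_exp0 (p : {poly A}) k : p`_0 = 0 -> (p ^+ k.+1)`_0 = 0.
Proof. by move=> h; rewrite exprS coefM0 h mul0r. Qed.
Lemma coef_exp1 (p : {poly A}) k : p`_0 = 0 -> (p ^+ k.+2)`_1 = 0.
Proof. by move=> h; rewrite exprS coefM1 h coef_exp0 // mul0r mulr0 addr0. Qed.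
Lemma coef_expP n (p : {poly A}) : p`_0 = 0 -> (1 < n)%N ->
  (expP n p)`_0 = 1 /\ (expP n p)`_1 = p`_1.
Proof.
move=> h n1; rewrite /expP -(subnKC n1) !coef_sum !big_ord_recl !coefCM /=.
rewrite !expr0 expr1 coef1 /= mulr1 ifact0 ifact1 !mul1r h add0r coef1 /= add0r.
split; (rewrite big1 ?addr0 //) => i _; rewrite coefCM !bump0.
  by rewrite coef_exp0 // mulr0.
by rewrite coef_exp1 // mulr0.
Qed.

Lemma Jev k (p : {poly A}) (t : nat) : (forall d, J k p`_d) -> J k p.[t%:R].
Proof.
move=> h; rewrite horner_coef; apply: Jsum => d _.
by rewrite sc_natX -sc_comm; apply: Jsc.
Qed.

Lemma expT_cg n x y : (1 < n)%N -> J 1 x -> cg n x y -> cg n (expT n x) (expT n y).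
Proof.
move=> n1 hx hxy.
have n0 : (0 < n)%N by apply: ltnW.
have hD : J n (y - x) by apply: cg_sym.
have := expT_add n0 n1 hx hD; rewrite addrC subrK => e.
apply: cg_sym; apply: cg_trans (cg_le (leqnSn n) e) _.
exact: cgJ.
Qed.

Section Core.
Variable n : nat.
Hypothesis n1 : (1 < n)%N.
Variables (TT HH : A -> Prop).
Hypothesis TT0 : TT 0.
Hypothesis TTD : forall a b, TT a -> TT b -> TT (a + b).
Hypothesis TTZ : forall r a, TT a -> TT (sc r * a).
Hypothesis TTJ : forall a, TT a -> J 1 a.
Hypothesis HHM : forall a b, HH a -> HH b -> HH (a * b).
Hypothesis expR : forall a, TT a -> exists h, HH h /\ cg n h (expT n a).
Hypothesis lnR : forall h, HH h -> exists a, TT a /\ cg n a (logT n h).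
Variable xi : A.
Hypothesis hxi : J 1 xi.
Hypothesis adT : forall y, TT y -> TT (xi * y - y * xi).
Variable eta : A.
Hypothesis heta : TT eta.

Lemma n0 : (0 < n)%N. Proof. exact: ltnW. Qed.

Definition CP := expP n (- (xi%:P * 'X)) * expP n ((xi + eta)%:P * 'X).

Lemma C_ev (t : nat) : CP.[t%:R] = expT n (- (xi * t%:R)) * expT n ((xi + eta) * t%:R).
Proof. by rewrite /CP evM !evexpP hornerN !evCX. Qed.

Lemma coefCX0 (c : A) : (c%:P * 'X)`_0 = 0.
Proof. by rewrite coefMX. Qed.
Lemma coefCX1 (c : A) : (c%:P * 'X)`_1 = c.
Proof. by rewrite coefMX /= coefC. Qed.

Lemma C_coef : CP`_0 = 1 /\ CP`_1 = eta.
Proof.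
have h1 : (- (xi%:P * 'X))`_0 = 0 by rewrite coefN coefCX0 oppr0.
have h2 : ((xi + eta)%:P * 'X)`_0 = 0 by rewrite coefCX0.
have [e10 e11] := coef_expP h1 n1; have [e20 e21] := coef_expP h2 n1.
rewrite /CP coefM0 coefM1 e10 e11 e20 e21 coefN !coefCX1 mul1r mulr1.
split => //.
by rewrite mul1r addrC addKr.
Qed.

Definition goodP (a : {poly A}) := [/\ a`_0 = 0, a`_1 = eta & forall d, TT a`_d].

Lemma TTN a : TT a -> TT (- a).
Proof. move=> h; have -> : - a = sc (-1) * a by rewrite scN sc1 mulN1r.
by apply: TTZ. Qed.
Lemma TT_sum I (r : seq I) (P : pred I) (f : I -> A) :
  (forall i, P i -> TT (f i)) -> TT (\sum_(i <- r | P i) f i).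
Proof. by move=> h; apply: (big_ind TT) => //. Qed.
Lemma TT_ev (a : {poly A}) (t : nat) : (forall d, TT a`_d) -> TT a.[t%:R].
Proof.
move=> h; rewrite horner_coef; apply: TT_sum => d _.
by rewrite sc_natX -sc_comm; apply: TTZ.
Qed.

Lemma cg_le_n k a b : (k <= n)%N -> cg n a b -> cg k a b.
Proof. exact: cg_le. Qed.

Lemma Z1 (P : A) (e : A) j : J 1 (P - 1) -> J j e ->
   cg j.+1 (e * P) (P * e).
Proof.
move=> hP he; rewrite /cg.
have -> : e * P - P * e = e * (P - 1) - (P - 1) * e.
  by rewrite mulrBr mulrBl mulr1 mul1r opprB addrA subrK.
apply: JB; first by rewrite -addn1; apply: JM.
by rewrite -add1n; apply: JM.
Qed.

Lemma J1M (P Q : A) : J 1 (P - 1) -> J 1 (Q - 1) -> J 1 (P * Q - 1).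
Proof.
move=> hP hQ1.
have -> : P * Q - 1 = (P - 1) * Q + (Q - 1) by rewrite mulrBl mul1r addrA subrK.
by apply: JD => //; apply: JMr.
Qed.

Definition eP (a : {poly A}) := expP n (- a) * CP - 1.

Lemma horner1A (x : A) : (1 : {poly A}).[x] = 1.
Proof. exact: hornerC. Qed.

Lemma e_ev a (s : nat) : (eP a).[s%:R] = expT n (- a.[s%:R]) * CP.[s%:R] - 1.
Proof. by rewrite /eP hornerD hornerN horner1A evM evexpP hornerN. Qed.

Lemma goodJ a (s : nat) : goodP a -> J 1 a.[s%:R].
Proof. by case=> _ _ h; apply: TTJ; apply: TT_ev. Qed.

Lemma e_J j a (s : nat) : (j <= n)%N -> goodP a ->
  (forall s : nat, cg j CP.[s%:R] (expT n a.[s%:R])) -> J j (eP a).[s%:R].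
Proof.
move=> jn ga hC; rewrite e_ev; apply: cg_trans (cgMl _ (hC s)) _.
exact: cg_le jn (expNT n0 (goodJ s ga)).
Qed.

Lemma ad_neg (t : nat) y : ad (- (xi * t%:R)) y = sc (- t%:R) * (xi * y - y * xi).
Proof.
apply: Aext => x; rewrite /ad !(addE, oppE, mulE, subE) sc_nat !scE !opZ !opN.
by rewrite opZ opprK scaleNr scalerBr opprB addrC.
Qed.

Lemma TT_adk (t : nat) i y : TT y -> TT (adk i (- (xi * t%:R)) y).
Proof.
move=> hy; elim: i => [|i IH] //=; rewrite ad_neg; apply: TTZ; exact: adT.
Qed.

Lemma cg_J k a b : cg k a b -> J k b -> J k a.
Proof. by move=> h1 h2; rewrite -(subrK b a); apply: JD. Qed.

Lemma Z1' (P e : A) j : J 1 (P - 1) -> J j e -> cg j.+1 ((1 + e) * P) (P * (1 + e)).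
Proof.
move=> hP he; rewrite mulrDl mulrDr mul1r mulr1; apply: cgD; first exact: cg_refl.
exact: Z1.
Qed.

Lemma cocycle j (a : {poly A}) (t : nat) : (0 < j)%N -> (j < n)%N -> goodP a ->
  (forall s : nat, cg j CP.[s%:R] (expT n a.[s%:R])) ->
  exists y, TT y /\ cg j.+1 ((eP a).[(t + t)%:R] - ((eP a).[t%:R] + (eP a).[t%:R])) y.
Proof.
move=> j0 jn ga hC.
have hjn : (j.+1 <= n)%N := jn.
have hjn' : (j <= n)%N := ltnW jn.
set Xt := xi * t%:R; set Tt := (xi + eta) * t%:R.
set al := a.[t%:R]; set be := a.[(t + t)%:R].
have JX : J 1 Xt by apply: JMr.
have JT : J 1 Tt by apply: JMr; apply: JD => //; apply: TTJ.
have Jal : J 1 al by apply: goodJ.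
have Jbe : J 1 be by apply: goodJ.
case: ga => a0 a1 aT.
set P := expT n (- Xt); set Q := expT n Xt; set ET := expT n Tt.
set e1 := (eP a).[t%:R]; set e2 := (eP a).[(t + t)%:R].
have c1E : CP.[t%:R] = P * ET by rewrite C_ev.
have c2E : CP.[(t + t)%:R] = expT n (- (Xt + Xt)) * expT n (Tt + Tt).
  by rewrite C_ev natrD !mulrDr.
have e1E : 1 + e1 = expT n (- al) * (P * ET) by rewrite /e1 e_ev c1E addrC subrK.
have e2E : 1 + e2 = expT n (- be) * CP.[(t + t)%:R] by rewrite /e2 e_ev addrC subrK.
have Je1 : J j e1 by apply: e_J.
have Je2 : J j e2 by apply: e_J.
have S1 : cg n CP.[(t + t)%:R] (P * (P * ET) * Q * (P * ET)).
  rewrite c2E opprD.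
  have E1 := @expTD n (- Xt) (- Xt) erefl (JN JX) (JN JX).
  have E2 := @expTD n Tt Tt erefl JT JT.
  apply: cg_trans (cgM E1 E2) _.
  have -> : P * (P * ET) * Q * (P * ET) = P * P * ET * (Q * P) * ET by rewrite !mulrA.
  rewrite mulrA; apply: cgMr; rewrite -{1}[P * P * ET]mulr1; apply: cgMl.
  exact/cg_sym/expTN/JX/n0.
have S2 : cg n (P * ET) (expT n al * (1 + e1)).
  rewrite e1E mulrA; apply: cg_sym; rewrite -{2}[P * ET]mul1r; apply: cgMr.
  exact: expTN n0 Jal.
set h1 := expT n al.
have S3 : cg n (1 + e2) (expT n (- be) * (P * (h1 * (1 + e1)) * Q * (h1 * (1 + e1)))).
  rewrite e2E; apply: cgMl; apply: cg_trans S1 _.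
  by apply: cgM; [apply: cgMr; apply: cgMl|]; exact: S2.
set u := e1 + e1.
set Y := expT n (- be) * P * h1 * Q * h1.
have JQh : J 1 (Q * h1 - 1) by apply: J1M; apply: expT_J1 n0 _.
have S4 : cg j.+1 (expT n (- be) * (P * (h1 * (1 + e1)) * Q * (h1 * (1 + e1)))) (Y * (1 + u)).
  have -> : expT n (- be) * (P * (h1 * (1 + e1)) * Q * (h1 * (1 + e1))) =
     (expT n (- be) * P * h1) * ((1 + e1) * (Q * h1)) * (1 + e1) by rewrite !mulrA.
  apply: cg_trans (cgMr _ (cgMl _ (Z1' JQh Je1))) _.
  have -> : expT n (- be) * P * h1 * (Q * h1 * (1 + e1)) * (1 + e1) =
     Y * ((1 + e1) * (1 + e1)) by rewrite /Y !mulrA.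
  apply: cgMl; rewrite /u mulrDr mulr1 mulrDl mul1r !addrA; apply: cgJ.
  by apply: (Jle (l := (j + j)%N)); [rewrite -addn1 leq_add2l | apply: JM].
have Ju : J j u by apply: JD.
have S5 : cg j.+1 Y (1 + (e2 - u)).
  have T1 : cg j.+1 (Y * (1 + u)) (1 + e2) := cg_sym (cg_trans (cg_le hjn S3) S4).
  have T2 : cg j.+1 Y (Y * (1 + u) * (1 - u)).
    rewrite -mulrA.
    have -> : (1 + u) * (1 - u) = 1 - u * u by rewrite mulrDl mul1r mulrBr mulr1 addrA subrK.
    rewrite mulrBr mulr1; apply: cg_sym; apply: cgJ; apply: JN; apply: JMl.
    by apply: (Jle (l := (j + j)%N)); [rewrite -addn1 leq_add2l | apply: JM].
  have T3 : cg j.+1 (Y * (1 + u) * (1 - u)) ((1 + e2) * (1 - u)) := cgMr _ T1.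
  have T4 : cg j.+1 ((1 + e2) * (1 - u)) (1 + (e2 - u)).
    rewrite mulrBr mulr1 mulrDl mul1r addrA; apply: cgB; first exact: cg_refl.
    by apply: cgJ; apply: (Jle (l := (j + j)%N)); [rewrite -addn1 leq_add2l | apply: JM].
  exact: cg_trans T2 (cg_trans T3 T4).
have PQ1 : cg n (P * Q) 1 := expNT n0 JX.
have QP1 : cg n (Q * P) 1 := expTN n0 JX.
set al' := \sum_(i < n) ifact i * adk i (- Xt) al.
have S6a : cg n (P * h1 * Q) (expT n (P * al * Q)) := conjT al PQ1 QP1.
have S6b : cg n (P * al * Q) al'.
  have := AdT al n0 (JN JX); by rewrite opprK.
have JPQ : J 1 (P * al * Q) by apply: JMr; apply: JMl.
have S6 : cg n Y (expT n (- be) * expT n al' * h1).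
  have -> : Y = expT n (- be) * (P * h1 * Q) * h1 by rewrite /Y !mulrA.
  apply: cgMr; apply: cgMl; apply: cg_trans S6a _; exact: expT_cg.
have Tal : TT al by apply: TT_ev.
have Tal' : TT al'.
  by apply: TT_sum => i _; apply: TTZ; apply: TT_adk.
have Tbe : TT (- be) by apply: TTN; apply: TT_ev.
have [hb [Hb hbE]] := expR Tbe.
have [ha' [Ha' ha'E]] := expR Tal'.
have [ha [Ha haE]] := expR Tal.
set hh := hb * ha' * ha.
have Hh : HH hh by apply: HHM => //; apply: HHM.
have S8 : cg n hh (expT n (- be) * expT n al' * h1) by apply: cgM => //; apply: cgM.
have S9 : cg j.+1 hh (1 + (e2 - u)).
  apply: cg_trans (cg_le hjn (cg_trans S8 (cg_sym S6))) S5.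
have Jx : J j (e2 - u) by apply: JB.
have L2 : cg j.+1 (hh - 1) (e2 - u).
  have := cgB S9 (cg_refl j.+1 1); by rewrite [1 + _]addrC addrK.
have Jh1 : J j (hh - 1) by apply: (cg_J (cg_le (leqnSn j) L2)).
have [th [Tth thE]] := lnR Hh.
exists th; split => //.
have L1 : cg j.+1 (logT n hh) (hh - 1) by apply: logT_cg.
apply: cg_sym; apply: cg_trans (cg_le hjn thE) (cg_trans L1 L2).
Qed.

Lemma coef_negP (a : {poly A}) : goodP a -> (- a)`_0 = 0 /\ (- a)`_1 = - eta.
Proof. by case=> a0 a1 _; rewrite !coefN a0 a1 oppr0. Qed.

Lemma r_id (T : R) d : ((2%:R) ^+ d - 2%:R) * T ^+ d = (T + T) ^+ d - (T ^+ d + T ^+ d).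
Proof.
have -> : T + T = 2%:R * T by rewrite mulr_natl mulr2n.
rewrite exprMn; set U := T ^+ d; set V := (2%:R : R) ^+ d.
by rewrite mulrBl -mulr2n mulr_natl.
Qed.

Lemma step j a : (0 < j)%N -> (j < n)%N -> goodP a ->
  (forall s : nat, cg j CP.[s%:R] (expT n a.[s%:R])) ->
  exists a', goodP a' /\ forall s : nat, cg j.+1 CP.[s%:R] (expT n a'.[s%:R]).
Proof.
move=> j0 jn ga hC.
have hjn : (j <= n)%N := ltnW jn.
set e := eP a.
have eJ : forall d, J j e`_d.
  apply: (interp (W := J j)); [exact: J0 | exact: JD | move=> r x; exact: Jsc |].
  by move=> t _; apply: e_J.
have [na0 na1] := coef_negP ga.
have [P0 P1] := coef_expP na0 n1.
have [C0 C1] := C_coef.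
have e0 : e`_0 = 0 by rewrite /e /eP coefB coefM0 P0 C0 mul1r coef1 subrr.
have e1 : e`_1 = 0.
  by rewrite /e /eP coefB coefM1 P0 C0 P1 na1 C1 coef1 mul1r mulr1 subrr subr0.
pose W x := exists y, TT y /\ cg j.+1 x y.
have W0 : W 0 by exists 0; split => //; exact: cg_refl.
have WD : forall x y, W x -> W y -> W (x + y).
  by move=> x y [x' [hx ex]] [y' [hy ey]]; exists (x' + y'); split; [apply: TTD | apply: cgD].
have WZ : forall r x, W x -> W (sc r * x).
  by move=> r x [x' [hx ex]]; exists (sc r * x'); split; [apply: TTZ | apply: cgMl].
pose rr d := ((2%:R : R) ^+ d - 2%:R).
set q := \poly_(d < size e) (sc (rr d) * e`_d).
have hq : forall t : nat, q.[t%:R] = e.[(t + t)%:R] - (e.[t%:R] + e.[t%:R]).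
  move=> t; rewrite horner_poly !horner_coef -big_split -sumrB /=.
  apply: eq_bigr => d _.
  rewrite !sc_natX -!sc_comm mulrA -scM -mulrDl -mulrBl -scD -scN -scD natrD.
  by congr (sc _ * _); rewrite mulrC /rr r_id.
have qW : forall d, W q`_d.
  apply: (interp (W := W)) => // t _; rewrite hq; exact: cocycle.
have eW : forall d, W e`_d.
  move=> d; case: (ltnP d (size e)) => hd; last by rewrite nth_default.
  case: d hd => [|[|d]] hd; [by rewrite e0 | by rewrite e1 |].
  have := qW d.+2; rewrite coef_poly hd.
  have ru : rr d.+2 \is a GRing.unit.
    rewrite /rr -natrX -natrB; last by rewrite !expnS leq_pmulr // muln_gt0 expn_gt0.
    apply: natU; rewrite subn_gt0 !expnS mulnA; apply: (@leq_trans (2 * 2)) => //.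
    by apply: leq_pmulr; rewrite expn_gt0.
  move=> /(WZ (rr d.+2)^-1); by rewrite mulrA -scM mulVr // sc1 mul1r.
have [b hb] := choice eW.
set bp := \poly_(d < size e) (if (1 < d)%N then b d else 0).
have hbp : forall d, TT bp`_d /\ cg j.+1 e`_d bp`_d.
  move=> d; rewrite coef_poly; case: (ltnP d (size e)) => hd; last first.
    by rewrite nth_default //; split => //; exact: cg_refl.
  case: ifP => hd1; first exact: hb.
  case: d hd hd1 => [|[|d]] // hd _; [rewrite e0 | rewrite e1]; split => //; exact: cg_refl.
have [_ _ aT] := ga.
exists (a + bp); split.
  split.
  - by rewrite coefD; case: ga => -> _ _; rewrite /bp coef_poly; case: ifP => _; rewrite addr0.
  - by rewrite coefD; case: ga => _ -> _; rewrite /bp coef_poly; case: ifP => _; rewrite addr0.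
  - by move=> d; rewrite coefD; apply: TTD => //; case: (hbp d).
move=> s.
set al := a.[s%:R]; set bs := bp.[s%:R]; set es := e.[s%:R].
have Jal : J 1 al by apply: goodJ.
have Jb : J j bs.
  apply: Jev => d; case: (hbp d) => _ h.
  apply: (cg_J (cg_le (leqnSn j) (cg_sym h))); exact: eJ.
have eb : cg j.+1 es bs.
  rewrite /cg /es /bs -hornerN -hornerD; apply: Jev => d.
  by rewrite coefD coefN; case: (hbp d).
have esE : expT n (- al) * CP.[s%:R] = 1 + es by rewrite /es /e e_ev addrC subrK.
rewrite hornerD -/al -/bs.
have T1 : cg j.+1 CP.[s%:R] (expT n al * (1 + es)).
  rewrite -esE mulrA; rewrite -{1}[CP.[s%:R]]mul1r; apply: cgMr.
  apply: (cg_le jn); apply: cg_sym; exact: expTN n0 Jal.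
apply: cg_trans T1 _.
apply: cg_trans (cgMl _ (cgD (cg_refl _ 1) eb)) _.
rewrite mulrDr mulr1.
apply: cg_trans (cgD (cg_refl _ _) (_ : cg j.+1 (expT n al * bs) bs)) _.
  rewrite /cg -{2}[bs]mul1r -mulrBl -add1n.
  by apply: JM; [exact: expT_J1 n0 Jal | exact: Jb].
exact/cg_sym/expT_add.
Qed.

Lemma iter_good j : (0 < j)%N -> (j <= n)%N ->
  exists a, goodP a /\ forall s : nat, cg j CP.[s%:R] (expT n a.[s%:R]).
Proof.
elim: j => [//|j IH] _ jn.
case: j IH jn => [|j] IH jn.
  exists (eta%:P * 'X); split.
    split; [exact: coefCX0 | exact: coefCX1 |].
    by move=> d; rewrite coefMX coefC; case: (d == 0%N) => //; case: (d.-1 == 0%N).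
  move=> s; rewrite C_ev evCX.
  have h1 : cg 1 (expT n (- (xi * s%:R)) * expT n ((xi + eta) * s%:R)) 1.
    apply: J1M; apply: expT_J1 n0 _; [apply: JN|]; apply: JMr => //.
    by apply: JD => //; apply: TTJ.
  apply: cg_trans h1 _; apply: cg_sym; apply: expT_J1 n0 _.
  by apply: JMr; apply: TTJ.
have [a [ga ha]] := IH (ltn0Sn j) (ltnW jn).
exact: (step (ltn0Sn j) jn ga ha).
Qed.

Lemma coc : exists a, TT a /\ cg n (expT n (- xi) * expT n (xi + eta)) (expT n a).
Proof.
have [a [[_ _ aT] ha]] := iter_good n0 (leqnn n).
exists a.[1%:R]; split; first exact: TT_ev.
by have := ha 1%N; rewrite C_ev !mulr1.
Qed.

End Core.

Lemma ord_eq0 m : ~ ord_eq F 0 m.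
Proof. by case=> _ h; have := h m.+1 (F0 _); rewrite ltnn. Qed.

Lemma End_ok k f : End_i F k f -> okop f.
Proof.
case=> hl hp; split => // j x hx; apply: (Fle (leq_addr k j)); exact: hp.
Qed.

Lemma liftE k f : End_i F k f -> exists a : A, fA a = f /\ J k a.
Proof. by move=> h; exists (MkA (End_ok h)); split => //; case: h. Qed.

Section GenTS.
Variables (T S : (M -> M) -> Prop).
Hypothesis hT : submod1 F T.
Hypothesis hS : subgroup1 F S.
Hypothesis hE : exp_ln_realized F T S.

Definition Ta (a : A) := T (fA a).
Definition Sa (a : A) := S (fA a).

Lemma Ta0 : Ta 0. Proof. by case: hT. Qed.
Lemma TaD a b : Ta a -> Ta b -> Ta (a + b).
Proof. by case: hT => _ _ h _; apply: h. Qed.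
Lemma TaZ r a : Ta a -> Ta (sc r * a).
Proof. by case: hT => _ _ _ h; apply: h. Qed.
Lemma TaJ a : Ta a -> J 1 a.
Proof. by case: hT => h _ _ _ /h []. Qed.
Lemma liftT f : T f -> exists a : A, fA a = f /\ Ta a.
Proof.
case: hT => h _ _ _ hf; have [a [ea _]] := liftE (h _ hf).
by exists a; split => //; rewrite /Ta ea.
Qed.

Lemma SaM a b : Sa a -> Sa b -> Sa (a * b).
Proof. by case: hS => _ _ h _; apply: h. Qed.
Lemma Sa1 : Sa 1. Proof. by case: hS. Qed.

Lemma GL_ok g : GL_i F 1 g -> okop g /\ exists gi, okop gi /\ cancel g gi /\ cancel gi g.
Proof.
case=> gi [c1 c2 hl [p1 p2] [e1 e2]]; split; first by split.
exists gi; split => //; split => // a x y.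
case: e2 => hl2 _.
move: (hl2 a x y) => /eqP; rewrite subr_eq => /eqP ->.
by rewrite scalerBr addrACA !subrK.
Qed.

Lemma liftS f : S f -> exists a b : A,
  [/\ fA a = f, Sa a, Sa b, a * b = 1 & b * a = 1].
Proof.
move=> hf; case: hS => hG _ _ hinv.
have [okf [gi [okgi [c1 c2]]]] := GL_ok (hG _ hf).
exists (MkA okf), (MkA okgi); split => //.
- by rewrite /Sa /=; apply: hinv c1 c2.
- by apply: Aext => x; rewrite mulE /= c2.
- by apply: Aext => x; rewrite mulE /= c1.
Qed.

Lemma Sa_inv a : Sa a -> exists b, [/\ Sa b, a * b = 1 & b * a = 1].
Proof.
move=> ha; have [a' [b [ea _ hb ab ba]]] := liftS ha.
have -> : a = a' by apply: Aext => x; rewrite ea.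
by exists b.
Qed.

Lemma SaJ a : Sa a -> J 1 (a - 1).
Proof.
case: hS => hG _ _ _ /hG [gi [_ _ _ _ [[_ h] _]]].
by move=> j x hx; rewrite subE oneE; apply: h.
Qed.

Lemma expR n : (0 < n)%N -> forall a, Ta a -> exists h, Sa h /\ cg n h (expT n a).
Proof.
case: n => // N _ a ha.
have [hexp _] := hE.
have h0 : forall m, ord_eq F (fA a 0) m -> (m <= N)%N by move=> m; rewrite op0 => /ord_eq0.
have [phi [ph hS' _]] := hexp (fA a) 0 N ha h0.
have [p [ep Jp]] := liftE ph.
exists (expT N.+1 a + p); split.
  rewrite /Sa; congr S: hS'; apply: funext => x.
  rewrite /Psi_exp addE ep sumE; congr (_ + _); apply: eq_bigr => k _.
  by rewrite mulE scE expE.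
by rewrite /cg addrC addKr.
Qed.

Lemma lnR n : (0 < n)%N -> forall h, Sa h -> exists a, Ta a /\ cg n a (logT n h).
Proof.
case: n => // N _ g hg.
have [_ hln] := hE.
have h0 : forall m, ord_eq F (fA g 0 - 0) m -> (m <= N)%N.
  by move=> m; rewrite op0 subrr => /ord_eq0.
have [phi [ph hT' _]] := hln (fA g) 0 N hg h0.
have [p [ep Jp]] := liftE ph.
exists (logT N.+1 g + p); split.
  rewrite /Ta; congr T: hT'; apply: funext => x.
  rewrite /Psi_ln addE ep sumE; congr (_ + _); apply: eq_bigr => k _.
  by rewrite mulE scE expE.
by rewrite /cg addrC addKr.
Qed.

Lemma logLevel n : (1 < n)%N -> forall g, Sa g -> forall j, (0 < j)%N -> (j <= n)%N ->
  exists xi, Ta xi /\ cg j g (expT n xi).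
Proof.
move=> n1 g hg; have n0 : (0 < n)%N := ltnW n1.
elim=> [//|j IH] _ jn.
case: j IH jn => [|j] IH jn.
  exists 0; split; first exact: Ta0.
  by rewrite expT0 //; apply: SaJ.
have [xi [txi exi]] := IH (ltn0Sn j) (ltnW jn).
have Jxi : J 1 xi := TaJ txi.
have [gx [Sgx egx]] := expR n0 txi.
have [gi [Sgi e1 e2]] := Sa_inv Sgx.
set g' := g * gi.
have Sg' : Sa g' by apply: SaM.
set e := g' - 1.
have Je : J j.+1 e.
  have h1 : cg j.+1 g' (expT n xi * gi) by apply: cgMr.
  have h2 : cg j.+1 (expT n xi * gi) 1.
    rewrite -e1; apply: cgMr; apply: cg_le (ltnW jn) _; exact: cg_sym.
  exact: cg_trans h1 h2.
have [xi' [txi' exi']] := lnR n0 Sg'.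
have L : cg j.+2 (logT n g') e by apply: logT_cg => //; exact: Je.
have xe : cg j.+2 xi' e := cg_trans (cg_le jn exi') L.
have Jxi' : J j.+1 xi' by apply: cg_J (cg_le (leqnSn _) xe) Je.
exists (xi + xi'); split; first exact: TaD.
have gE : g = gx + e * gx.
  by rewrite -{1}[gx]mul1r -mulrDl /e addrC subrK /g' -mulrA e2 mulr1.
rewrite gE; apply: cg_sym; apply: cg_trans (expT_add (ltn0Sn j) n1 Jxi Jxi') _.
apply: cgD; first by apply: (cg_le jn); exact: cg_sym.
apply: cg_trans xe _; apply: cg_sym.
rewrite /cg -{2}[e]mulr1 -mulrBr; rewrite -addn1; apply: JM => //.
exact: SaJ Sgx.
Qed.

End GenTS.

Lemma tail_F N a z m : J 1 a -> F m (a z) -> F m.+1 ((expT N.+2 a - 1 - a) z).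
Proof.
move=> ha hz.
rewrite /expT !big_ord_recl !expr0 expr1 mulr1 ifact0 ifact1 mul1r.
have -> : 1 + (a + \sum_(i < N) ifact (bump 0 (bump 0 i)) * a ^+ bump 0 (bump 0 i)) - 1 - a
   = \sum_(i < N) ifact i.+2 * a ^+ i.+2.
  by rewrite [1 + _]addrC addrK [a + _]addrC addrK.
rewrite sumE; apply: (big_ind (F m.+1)) => //; [exact: F0 | move=> x y; exact: FD |].
move=> i _; rewrite mulE scE; apply: FZ.
rewrite exprSr mulE; have := Jexp1 i.+1 ha hz.
apply: Fle; by rewrite addnS ltnS leq_addr.
Qed.

Lemma ord_uniq w m m' : ord_eq F w m -> ord_eq F w m' -> m = m'.
Proof. by case=> h1 h2 [h1' h2']; apply/eqP; rewrite eqn_leq h2' // h2. Qed.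

Lemma rearr (u v z w : M) : u - z - w = (u - v) + (v - z - w).
Proof. by rewrite !addrA subrK. Qed.

Lemma rearr2 (u v z w : M) : w = (u - z) - (u - v) - (v - z - w).
Proof.
rewrite opprB [u - z + _]addrC addrA.
rewrite subrK.
rewrite opprB.
by rewrite [v - z + _]addrC subrK.
Qed.

Section Main.
Variables (G H TG TH : (M -> M) -> Prop).
Hypothesis sG : subgroup1 F G.
Hypothesis sH : subgroup1 F H.
Hypothesis hGH : forall f, gen_subgroup F G H f <-> prod_set G H f.
Hypothesis tG : submod1 F TG.
Hypothesis tH : submod1 F TH.
Hypothesis hbr : forall xi eta, TG xi -> TH eta -> TH (fun x => xi (eta x) - eta (xi x)).
Hypothesis eG : exp_ln_realized F TG G.
Hypothesis eH : exp_ln_realized F TH H.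

Lemma prodExp n : (1 < n)%N -> forall xi eta, Ta TG xi -> Ta TH eta ->
  exists g h, [/\ Sa G g, Sa H h & cg n (g * h) (expT n (xi + eta))].
Proof.
move=> n1 xi eta hxi heta; have n0 := ltnW n1.
have [a [ha ea]] := @coc n n1 (Ta TH) (Sa H) (Ta0 tH) (TaD tH) (TaZ tH) (TaJ tH) (SaM sH)
  (expR eH n0) (lnR eH n0) xi (TaJ tG hxi) (fun y hy => hbr hxi hy) eta heta.
have [g [Sg eg]] := expR eG n0 hxi.
have [h [Sh eh]] := expR eH n0 ha.
exists g, h; split => //.
apply: cg_trans (cgM eg eh) _; apply: cg_trans (cgMl _ (cg_sym ea)) _.
rewrite mulrA -{2}[expT n (xi + eta)]mul1r; apply: cgMr; exact: expTN n0 (TaJ tG hxi).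
Qed.

Definition PS (s : A) := exists g h, [/\ Sa G g, Sa H h & s = g * h].

Lemma gen_comp f f' : gen_subgroup F G H f -> gen_subgroup F G H f' ->
  gen_subgroup F G H (f \o f').
Proof.
move=> h1 h2 S hSg hG hH; have := h1 S hSg hG hH; have := h2 S hSg hG hH.
by case: hSg => _ _ hc _ a b; apply: hc.
Qed.

Lemma gen_inv f f' : gen_subgroup F G H f -> cancel f f' -> cancel f' f ->
  gen_subgroup F G H f'.
Proof.
move=> h1 c1 c2 S hSg hG hH; have := h1 S hSg hG hH.
by case: hSg => _ _ _ hi a; apply: hi a c1 c2.
Qed.

Lemma PS_gen s : PS s -> gen_subgroup F G H (fA s).
Proof. by case=> g [h [hg hh ->]]; apply/hGH; exists (fA g), (fA h). Qed.

Lemma gen_PS s : gen_subgroup F G H (fA s) -> PS s.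
Proof.
move/hGH => [g [h [hg hh e]]].
have [gA [_ [eg Sg _ _ _]]] := liftS sG hg.
have [hA [_ [eh Sh _ _ _]]] := liftS sH hh.
exists gA, hA; split => //; apply: Aext => x.
by rewrite mulE e eg eh.
Qed.

Lemma PS_M a b : PS a -> PS b -> PS (a * b).
Proof. by move=> ha hb; apply: gen_PS; apply: gen_comp; apply: PS_gen. Qed.

Lemma PS_inv a b : PS a -> a * b = 1 -> b * a = 1 -> PS b.
Proof.
move=> ha e1 e2; apply: gen_PS; apply: (gen_inv (PS_gen ha)) => x.
  by have := congr1 (fun f : A => f x) e2.
by have := congr1 (fun f : A => f x) e1.
Qed.

Lemma prodLog n : (1 < n)%N -> forall s, PS s ->
  exists xi eta, [/\ Ta TG xi, Ta TH eta & cg n s (expT n (xi + eta))].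
Proof.
move=> n1 s hs; have n0 : (0 < n)%N := ltnW n1.
suff : forall j, (0 < j)%N -> (j <= n)%N ->
  exists xi eta, [/\ Ta TG xi, Ta TH eta & cg j s (expT n (xi + eta))].
  by move/(_ n n0 (leqnn n)).
elim=> [//|j IH] _ jn.
case: j IH jn => [|j] IH jn.
  exists 0, 0; split; [exact: Ta0 | exact: Ta0 |].
  rewrite addr0 expT0 //; case: hs => g [h [hg hh ->]].
  by apply: J1M; [apply: (SaJ sG) | apply: (SaJ sH)].
have [xi [eta [hxi heta es]]] := IH (ltn0Sn j) (ltnW jn).
set tau := xi + eta.
have Jtau : J 1 tau by apply: JD; [apply: (TaJ tG) | apply: (TaJ tH)].
have [g0 [h0 [Sg0 Sh0 ef]]] := prodExp n1 hxi heta.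
have [gi [Sgi g1 g2]] := Sa_inv sG Sg0.
have [hi [Shi h1 h2]] := Sa_inv sH Sh0.
set f0 := g0 * h0; set fi := hi * gi.
have f1 : f0 * fi = 1 by rewrite /f0 /fi mulrA -[g0 * h0 * hi]mulrA h1 mulr1 g1.
have f2 : fi * f0 = 1 by rewrite /f0 /fi mulrA -[hi * gi * g0]mulrA g2 mulr1 h2.
have PSf0 : PS f0 by exists g0, h0.
have PSfi : PS fi := PS_inv PSf0 f1 f2.
set s' := fi * s.
have [g' [h' [Sg' Sh' es']]] : PS s' by apply: PS_M.
have [xi' [txi' exi']] := logLevel tG sG eG n1 Sg' n0 (leqnn n).
have [eta' [teta' eeta']] := logLevel tH sH eH n1 Sh' n0 (leqnn n).
have Jxi' : J 1 xi' := TaJ tG txi'.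
have Jeta' : J 1 eta' := TaJ tH teta'.
have Js' : cg j.+1 s' 1.
  rewrite -f2; apply: cgMl; apply: cg_trans es _.
  by apply: (cg_le (ltnW jn)); apply: cg_sym.
have E1 : cg j.+1 (expT n xi' * expT n eta') 1.
  apply: cg_trans _ Js'; rewrite es'; apply: (cg_le (ltnW jn)); apply: cg_sym.
  exact: cgM.
have E2 : cg j.+1 (expT n xi') (expT n (- eta')).
  apply: cg_trans (_ : cg j.+1 _ (expT n xi' * expT n eta' * expT n (- eta'))) _.
    rewrite -mulrA -{1}[expT n xi']mulr1; apply: cgMl; apply: (cg_le (ltnW jn)).
    exact/cg_sym/expTN.
  by rewrite -{2}[expT n (- eta')]mul1r; apply: cgMr.
have E3 : cg j.+1 xi' (- eta') := expT_inj n1 Jxi' (JN Jeta') E2.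
set d := xi' + eta'.
have Jd : J j.+1 d by move: E3; rewrite /cg opprK.
have etaE : eta' = - xi' + d by rewrite /d addrA addNr add0r.
have S1 : cg j.+2 s' (1 + d).
  apply: cg_trans (_ : cg j.+2 s' (expT n xi' * expT n eta')) _.
    by rewrite es'; apply: (cg_le jn); apply: cgM.
  rewrite etaE.
  apply: cg_trans (cgMl _ (expT_add (ltn0Sn j) n1 (JN Jxi') Jd)) _.
  rewrite mulrDr; apply: cgD; first by apply: (cg_le jn); apply: expTN.
  rewrite /cg -{2}[d]mul1r -mulrBl -add1n; apply: JM => //; exact: expT_J1.
have sE : s = f0 * s' by rewrite /s' mulrA f1 mul1r.
exists (xi + xi'), (eta + eta'); split; [exact: TaD | exact: TaD |].
rewrite addrACA -/tau -/d sE.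
apply: cg_trans (_ : cg j.+2 (f0 * s') (expT n tau * (1 + d))) _.
  by apply: cgM; [apply: (cg_le jn) | exact: S1].
rewrite mulrDr mulr1; apply: cg_sym; apply: cg_trans (expT_add (ltn0Sn j) n1 Jtau Jd) _.
apply: cgD; first exact: cg_refl.
apply: cg_sym; rewrite /cg -{2}[d]mul1r -mulrBl -add1n; apply: JM => //; exact: expT_J1.
Qed.



Lemma conclA : pointwise_Lie F (sum_set TG TH) (prod_set G H).
Proof.
split.
- move=> f z [xi1 [eta1 [hx he ->]]] /=.
  case: (EM (exists m, ord_eq F (xi1 z + eta1 z) m)) => [[m hm]|hno]; last first.
    exists (id \o id); split.
      by exists id, id; split => //; [case: sG | case: sH].
    by move=> m hm; case: hno; exists m.
  have [xa [exa txa]] := liftT tG hx.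
  have [ea [eea tea]] := liftT tH he.
  have n1 : (1 < m.+2)%N by [].
  have [g [h [Sg Sh egh]]] := prodExp n1 txa tea.
  exists (fA g \o fA h); split; first by exists (fA g), (fA h).
  move=> m' hm'; have <- := ord_uniq hm hm'.
  exists m.+1; split => //.
  set tau := xa + ea.
  have tz : tau z = xi1 z + eta1 z by rewrite addE exa eea.
  rewrite -tz (rearr _ (expT m.+2 tau z)); apply: FD.
    have := egh 0 z (Fall z); rewrite add0n subE mulE => /(Fle (leqnSn _)).
    by [].
  have Jt : J 1 tau by apply: JD; [apply: (TaJ tG) | apply: (TaJ tH)].
  have hz : F m (tau z) by rewrite tz; case: hm.
  by have := tail_F m Jt hz; rewrite !subE oneE.
- move=> f z [g [h [hg hh ->]]] /=.
  case: (EM (exists m, ord_eq F (g (h z) - z) m)) => [[m hm]|hno]; last first.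
    exists (fun x => (fun _ : M => 0 : M) x + (fun _ : M => 0 : M) x); split.
      by exists (fun _ => 0), (fun _ => 0); split => //; [case: tG | case: tH].
    by move=> m hm; case: hno; exists m.
  have [gA [_ [egA SgA _ _ _]]] := liftS sG hg.
  have [hA [_ [ehA ShA _ _ _]]] := liftS sH hh.
  set s := gA * hA.
  have PSs : PS s by exists gA, hA.
  have n1 : (1 < m.+2)%N by [].
  have [xi [eta [txi teta est]]] := prodLog n1 PSs.
  exists (fun x => fA xi x + fA eta x); split; first by exists (fA xi), (fA eta).
  move=> m' hm'; have <- := ord_uniq hm hm'.
  exists m.+1; split => //.
  set tau := xi + eta.
  have sz : s z = g (h z) by rewrite mulE egA ehA.
  have Jt : J 1 tau by apply: JD; [apply: (TaJ tG) | apply: (TaJ tH)].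
  have hs : F m.+1 ((s - expT m.+2 tau) z).
    by have := est 0 z (Fall z); rewrite add0n => /(Fle (leqnSn _)).
  have htau : forall p, (p <= m)%N -> F p (tau z).
    elim=> [|p IH] hp; first exact: Fall.
    rewrite (rearr2 (s z) (expT m.+2 tau z) z (tau z)).
    apply: FB; first apply: FB.
    - by rewrite sz; case: hm => hm _; apply: Fle hp hm.
    - by move: hs; rewrite subE; apply: Fle; apply: ltnW.
    - by have := tail_F m Jt (IH (ltnW hp)); rewrite !subE oneE.
  rewrite -[fA xi z + fA eta z]/(tau z) -sz (rearr _ (expT m.+2 tau z)); apply: FD.
    by move: hs; rewrite subE.
  by have := tail_F m Jt (htau m (leqnn m)); rewrite !subE oneE.
Qed.

End Main.
End Ops.


Unset Implicit Arguments.

Theorem lemma3p21 (R : comUnitRingType) (M : lmodType R)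
  (F : nat -> M -> Prop) (G H TG TH : (M -> M) -> Prop) :
  (* k contains Q *)
  (forall n : nat, (n.+1)%:R \is a @GRing.unit R) ->
  filtration F ->
  subgroup1 F G -> subgroup1 F H ->
  (forall f, gen_subgroup F G H f <-> prod_set G H f) ->
  submod1 F TG -> submod1 F TH ->
  (forall xi eta, TG xi -> TH eta ->
     TH (fun x => xi (eta x) - eta (xi x))) ->
  pointwise_Lie F TG G -> pointwise_Lie F TH H ->
  exp_ln_realized F TG G -> exp_ln_realized F TH H ->
  pointwise_Lie F (sum_set TG TH) (prod_set G H).
Proof.
move=> hQ hF sG sH hGH tG tH hbr _ _ eG eH.
case: (EM (exists x0 : M, x0 != 0)) => [[x0 hx0]|hz].
  exact: (conclA hF hx0 hQ sG sH hGH tG tH hbr eG eH).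
have z0 : forall x : M, x = 0.
  by move=> x; apply/eqP; apply/negPn/negP => h; apply: hz; exists x.
have no : forall w m, ~ ord_eq F w m by move=> w m; rewrite (z0 w); apply: ord_eq0.
split.
- move=> f z _; exists (id \o id); split; last by move=> m /no.
  by exists id, id; split => //; [case: sG | case: sH].
- move=> f z _; exists (fun x => (fun _ : M => 0 : M) x + (fun _ : M => 0 : M) x); split.
    by exists (fun _ => 0), (fun _ => 0); split => //; [case: tG | case: tH].
  by move=> m /no.
Qed.
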